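(* Let $\mathbb X,\mathbb Y$ be Euclidean spaces, $\Phi\colon\mathbb X\rightrightarrows\mathbb Y$ with closed graph, $(\bar x,\bar y)\in\operatorname{gph}\Phi$ and $u\in\mathbb S_{\mathbb X}$. Each of the following three properties remains equivalent to itself when, in its definition, the requirement $x_k^*\in\widehat D^*\Phi(x_k,y_k)(\lambda_k)$ is replaced by $x_k^*\in D^*\Phi(x_k,y_k)(\lambda_k)$: (a) asymptotic regularity of $\Phi$ at $(\bar x,\bar y)$: for all sequences $(x_k,y_k)\in\operatorname{gph}\Phi$, $x_k^*$, $\lambda_k$ and $x^*$ with $x_k\to\bar x$, $y_k\to\bar y$, $x_k^*\to x^*$ and $x_k^*\in\widehat D^*\Phi(x_k,y_k)(\lambda_k)$ for all $k$, one has $x^*\in\operatorname{Im}D^*\Phi(\bar x,\bar y)$; (b) asymptotic regularity of $\Phi$ at $(\bar x,\bar y)$ in direction $u$: for all sequences $(x_k,y_k)\in\operatorname{gph}\Phi$, $x_k^*\in\mathbb X$, $\lambda_k\in\mathbb Y$ and $x^*\in\mathbb X$, $y^*\in\mathbb Y$ with $x_k\notin\Phi^{-1}(\bar y)$, $y_k\ne\bar y$, $x_k^*\in\widehat D^*\Phi(x_k,y_k)(\lambda_k)$ for all $k$ and the convergences (C): $x_k\to\bar x$, $y_k\to\bar y$, $x_k^*\to x^*$, $\frac{x_k-\bar x}{\|x_k-\bar x\|}\to u$, $\frac{y_k-\bar y}{\|x_k-\bar x\|}\to0$, $\frac{\|y_k-\bar y\|}{\|x_k-\bar x\|}\lambda_k\to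 y^*$, $\|\lambda_k\|\to\infty$, $\frac{y_k-\bar y}{\|y_k-\bar y\|}-\frac{\lambda_k}{\|\lambda_k\|}\to0$, one has $x^*\in\operatorname{Im}D^*\Phi(\bar x,\bar y)$; (c) strong asymptotic regularity of $\Phi$ at $(\bar x,\bar y)$ in direction $u$: the same as (b) but with conclusion $x^*\in\operatorname{Im}D^*\Phi((\bar x,\bar y);(u,0))$.
   Context: $\widehat D^*\Phi(x,y)(y^* )=\{x^*\mid(x^*,-y^* )\in\widehat{\mathcal N}_{\operatorname{gph}\Phi}(x,y)\}$ (regular coderivative), $D^*\Phi(x,y)(y^* )$ likewise with the limiting normal cone $\mathcal N$, and $D^*\Phi((\bar x,\bar y);(u,v))(y^* )=\{x^*\mid(x^*,-y^* )\in\mathcal N_{\operatorname{gph}\Phi}((\bar x,\bar y);(u,v))\}$ with the directional limiting normal cone $\mathcal N_Q(z;w)$ = set of $\eta$ with $w_k\to w$, $t_k\downarrow0$, $\eta_k\to\eta$, $\eta_k\in\widehat{\mathcal N}_Q(z+t_kw_k)$. $\operatorname{Im}\Psi:=\bigcup_{y^*}\Psi(y^* )$. *)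

(* Defs.v *)
(* Euclidean spaces X = R^n, Y = R^m realised as
   row vectors 'rV[R]_n with the standard inner product and Euclidean norm. *)
From HB Require Import structures.
From mathcomp Require Import all_boot all_order all_algebra.
From mathcomp Require Import all_classical all_reals all_analysis.
Set Implicit Arguments. Unset Strict Implicit. Unset Printing Implicit Defensive.
Import Order.TTheory GRing.Theory Num.Theory.
Import numFieldNormedType.Exports.
Local Open Scope classical_set_scope.
Local Open Scope ring_scope.

Section Defs.
Variable R : realType.

Definition dotv {n} (a b : 'rV[R]_n) : R := \sum_(i < n) a 0 i * b 0 i.
Definition enorm {n} (a : 'rV[R]_n) : R := Num.sqrt (dotv a a).

Definition pdot {n m} (a b : 'rV[R]_n * 'rV[R]_m) : R := dotv a.1 b.1 + dotv a.2 b.2.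
Definition pnorm {n m} (a : 'rV[R]_n * 'rV[R]_m) : R := Num.sqrt (pdot a a).
Definition psub {n m} (a b : 'rV[R]_n * 'rV[R]_m) : 'rV[R]_n * 'rV[R]_m :=
  (a.1 - b.1, a.2 - b.2).

Definition gph {n m} (Phi : 'rV[R]_n -> set 'rV[R]_m) : set ('rV[R]_n * 'rV[R]_m) :=
  [set z | Phi z.1 z.2].

(* regular (Frechet) normal cone; empty outside Q *)
Definition rnormal {n m} (Q : set ('rV[R]_n * 'rV[R]_m)) (z eta : 'rV[R]_n * 'rV[R]_m)
  : Prop :=
  Q z /\ forall e : R, 0 < e -> exists2 d : R, 0 < d &
    forall z', Q z' -> pnorm (psub z' z) < d ->
      pdot eta (psub z' z) <= e * pnorm (psub z' z).

Definition lnormal {n m} (Q : set ('rV[R]_n * 'rV[R]_m)) (z eta : 'rV[R]_n * 'rV[R]_m)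
  : Prop :=
  exists (zk etak : nat -> 'rV[R]_n * 'rV[R]_m),
    [/\ (forall k, rnormal Q (zk k) (etak k)), zk @ \oo --> z & etak @ \oo --> eta].

Definition dnormal {n m} (Q : set ('rV[R]_n * 'rV[R]_m))
  (z w eta : 'rV[R]_n * 'rV[R]_m) : Prop :=
  exists (wk etak : nat -> 'rV[R]_n * 'rV[R]_m) (tk : nat -> R),
    [/\ wk @ \oo --> w, (forall k, 0 < tk k), tk @ \oo --> (0 : R),
        etak @ \oo --> eta &
        forall k, rnormal Q (z.1 + tk k *: (wk k).1, z.2 + tk k *: (wk k).2) (etak k)].

(* coderivatives: Dstar Phi x y ystar xstar  means  xstar \in D*Phi(x,y)(ystar) *)
Definition rcoder {n m} (Phi : 'rV[R]_n -> set 'rV[R]_m) (x : 'rV[R]_n) (y ystar : 'rV[R]_m)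
  : set 'rV[R]_n := [set xs | rnormal (gph Phi) (x, y) (xs, - ystar)].
Definition lcoder {n m} (Phi : 'rV[R]_n -> set 'rV[R]_m) (x : 'rV[R]_n) (y ystar : 'rV[R]_m)
  : set 'rV[R]_n := [set xs | lnormal (gph Phi) (x, y) (xs, - ystar)].
Definition dcoder {n m} (Phi : 'rV[R]_n -> set 'rV[R]_m) (x : 'rV[R]_n) (y : 'rV[R]_m)
  (u : 'rV[R]_n) (v ystar : 'rV[R]_m) : set 'rV[R]_n :=
  [set xs | dnormal (gph Phi) (x, y) (u, v) (xs, - ystar)].

Definition Im {n m} (Psi : 'rV[R]_m -> set 'rV[R]_n) : set 'rV[R]_n :=
  [set xs | exists ys, Psi ys xs].

Definition coderType n m := 'rV[R]_n -> 'rV[R]_m -> 'rV[R]_m -> set 'rV[R]_n.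

(* (a) asymptotic regularity, with the coderivative used along the
   sequence as parameter D *)
Definition asym_reg {n m} (D : coderType n m) (Phi : 'rV[R]_n -> set 'rV[R]_m)
  (xb : 'rV[R]_n) (yb : 'rV[R]_m) : Prop :=
  forall (xk : nat -> 'rV[R]_n) (yk : nat -> 'rV[R]_m) (xsk : nat -> 'rV[R]_n)
         (lamk : nat -> 'rV[R]_m) (xs : 'rV[R]_n),
    (forall k, gph Phi (xk k, yk k)) ->
    xk @ \oo --> xb -> yk @ \oo --> yb -> xsk @ \oo --> xs ->
    (forall k, D (xk k) (yk k) (lamk k) (xsk k)) ->
    Im (lcoder Phi xb yb) xs.

(* the hypotheses of (b)/(c), with conclusion set T *)
Definition dir_asym_prop {n m} (D : coderType n m) (Phi : 'rV[R]_n -> set 'rV[R]_m)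
  (xb : 'rV[R]_n) (yb : 'rV[R]_m) (u : 'rV[R]_n) (T : set 'rV[R]_n) : Prop :=
  forall (xk : nat -> 'rV[R]_n) (yk : nat -> 'rV[R]_m) (xsk : nat -> 'rV[R]_n)
         (lamk : nat -> 'rV[R]_m) (xs : 'rV[R]_n) (ys : 'rV[R]_m),
    (forall k, gph Phi (xk k, yk k)) ->
    (forall k, ~ Phi (xk k) yb) ->
    (forall k, yk k != yb) ->
    (forall k, D (xk k) (yk k) (lamk k) (xsk k)) ->
    xk @ \oo --> xb -> yk @ \oo --> yb -> xsk @ \oo --> xs ->
    (fun k => (enorm (xk k - xb))^-1 *: (xk k - xb)) @ \oo --> u ->
    (fun k => (enorm (xk k - xb))^-1 *: (yk k - yb)) @ \oo --> (0 : 'rV[R]_m) ->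
    (fun k => (enorm (yk k - yb) / enorm (xk k - xb)) *: lamk k) @ \oo --> ys ->
    (fun k => enorm (lamk k)) @ \oo --> +oo ->
    (fun k => (enorm (yk k - yb))^-1 *: (yk k - yb) - (enorm (lamk k))^-1 *: lamk k)
      @ \oo --> (0 : 'rV[R]_m) ->
    T xs.

Definition dir_asym_reg {n m} (D : coderType n m) (Phi : 'rV[R]_n -> set 'rV[R]_m)
  (xb : 'rV[R]_n) (yb : 'rV[R]_m) (u : 'rV[R]_n) : Prop :=
  dir_asym_prop D Phi xb yb u (Im (lcoder Phi xb yb)).

Definition strong_dir_asym_reg {n m} (D : coderType n m) (Phi : 'rV[R]_n -> set 'rV[R]_m)
  (xb : 'rV[R]_n) (yb : 'rV[R]_m) (u : 'rV[R]_n) : Prop :=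
  dir_asym_prop D Phi xb yb u (Im (dcoder Phi xb yb u 0)).

End Defs.

(* Main.v *)
Require Import Defs.
From HB Require Import structures.
From mathcomp Require Import all_boot all_order all_algebra.
From mathcomp Require Import all_classical all_reals all_analysis.
From mathcomp Require Import lra.
Import Order.TTheory GRing.Theory Num.Theory.
Import numFieldNormedType.Exports.
Local Open Scope classical_set_scope.
Local Open Scope ring_scope.

Set Implicit Arguments. Unset Strict Implicit.
Section Helpers.
Variable R : realType.

Lemma enorm_cont k : continuous (@enorm R k).
Proof.
move=> a; rewrite /enorm /dotv.
apply: (@continuous_comp _ _ _ (fun a : 'rV[R]_k => \sum_(i < k) a 0 i * a 0 i) (@Num.sqrt R)); last exact: sqrt_continuous.
have := (@continuous_big R^o 'I_k +%R 0 xpredT _ _ (index_enum 'I_k) (fun i (a : 'rV[R]_k) => a 0 i * a 0 i)).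
apply => //; last first.
move=> i _ b; apply: (@cvgM _ _ (nbhs b)); exact: coord_continuous.

exact: add_continuous.
Qed.

Lemma enorm_eq0 k (a : 'rV[R]_k) : enorm a = 0 -> a = 0.
Proof.
have sq (x : R) : 0 <= x * x by rewrite -expr2 sqr_ge0.
rewrite /enorm /dotv => /eqP; rewrite sqrtr_eq0 => H.
have H0 : \sum_(i < k) a 0 i * a 0 i = 0.
  apply/eqP; rewrite eq_le H /=; apply: sumr_ge0 => i _; exact: sq.
apply/rowP => i; rewrite mxE.
have := (psumr_eq0P (fun j _ => sq (a 0 j)) H0 (i:=i) isT).
by move/eqP; rewrite mulf_eq0 orbb => /eqP.
Qed.

Lemma enorm0 k : enorm (0 : 'rV[R]_k) = 0.
Proof. by rewrite /enorm /dotv big1 ?sqrtr0 // => i _; rewrite mxE mul0r. Qed.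

Lemma natSinv_lt {e : R} : 0 < e -> \forall k \near \oo, k.+1%:R^-1 < e.
Proof. move=> e0; exact: (near_infty_natSinv_lt (PosNum e0)). Qed.


Lemma ball_near (V : normedModType R) (p : V) (e : R) : 0 < e ->
  \forall v \near p, `|v - p| < e.
Proof.
move=> e0; near=> v; rewrite distrC; near: v.
exact: ((cvgrPdist_lt _ _).1 (@cvg_id _ (nbhs p)) e e0).
Unshelve. all: by end_near.
Qed.

Lemma cvg_near_lt (T : Type) (FF : set_system T) {FFF : Filter FF}
  (W : normedModType R) (f : T -> W) (a : W) (e : R) :
  f @ FF --> a -> 0 < e -> \forall x \near FF, `|f x - a| < e.
Proof.
move=> fa e0; near=> x; rewrite distrC; near: x.
exact: ((cvgrPdist_lt _ _).1 fa e e0).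
Unshelve. all: by end_near.
Qed.

Lemma diag (V W : normedModType R) (Q : set V) (p : nat -> V) (F : V -> W)
  (G : nat -> set V) :
  (forall k, closure Q (p k)) -> (forall k, nbhs (p k) (G k)) ->
  exists q : nat -> V, [/\ forall k, Q (q k), forall k, G k (q k),
     (fun k => q k - p k) @ \oo --> 0 &
     ((\forall k \near \oo, F v @[v --> p k] --> F (p k)) ->
        (fun k => F (q k) - F (p k)) @ \oo --> 0)].
Proof.
move=> hQ hG.
have H : forall k, exists v, [/\ Q v, G k v, `|v - p k| < k.+1%:R^-1 &
    (F x @[x --> p k] --> F (p k) -> `|F v - F (p k)| < k.+1%:R^-1)].
  move=> k; have e0 : 0 < k.+1%:R^-1 :> R by rewrite invr_gt0 ltr0n.
  have N : \forall v \near p k, [/\ G k v, `|v - p k| < k.+1%:R^-1 &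
      (F x @[x --> p k] --> F (p k) -> `|F v - F (p k)| < k.+1%:R^-1)].
    case: (pselect (F x @[x --> p k] --> F (p k))) => [cF|ncF].
    - have h1 := hG k; have h2 := @ball_near _ (p k) _ e0.
      have h3 := @cvg_near_lt _ (nbhs (p k)) _ _ F (F (p k)) _ cF e0.
      near=> v; split.
      + by near: v.
      + by near: v.
      + by move=> _; near: v; apply: h3.
    - have h1 := hG k; have h2 := @ball_near _ (p k) _ e0.
      near=> v; split.
      + by near: v.
      + by near: v.
      + by move=> /ncF.
  have [v [Qv [Gv vp Fv]]] := hQ k _ N.
  by exists v.
have [q Hq] := choice H.
exists q; split.
- by move=> k; case: (Hq k).
- by move=> k; case: (Hq k).
- apply/cvgr0Pnorm_lt => e e0.
  have h := natSinv_lt e0.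
  near=> k; case: (Hq k) => _ _ lt _; apply: lt_trans lt _; by near: k.
- move=> cF; apply/cvgr0Pnorm_lt => e e0.
  have h := natSinv_lt e0.
  near=> k; have ck : F v @[v --> p k] --> F (p k) by near: k.
  case: (Hq k) => _ _ _ /(_ ck) lt; apply: lt_trans lt _; by near: k.
Unshelve. all: by end_near.
Qed.


Lemma cvg_enorm k (T : Type) (FF : set_system T) {FFF : Filter FF} (f : T -> 'rV[R]_k) a :
  f @ FF --> a -> enorm (f x) @[x --> FF] --> enorm a.
Proof. move=> h; exact: (continuous_cvg _ (@enorm_cont k a) h). Qed.

Lemma cvg_fst1 (A B : normedModType R) (T : Type) (FF : set_system T) {FFF : Filter FF}
  (f : T -> A * B) (a : A * B) : f @ FF --> a -> (f x).1 @[x --> FF] --> a.1.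
Proof. move=> h; apply: (cvg_comp _ _ h); exact: cvg_fst. Qed.

Lemma cvg_snd1 (A B : normedModType R) (T : Type) (FF : set_system T) {FFF : Filter FF}
  (f : T -> A * B) (a : A * B) : f @ FF --> a -> (f x).2 @[x --> FF] --> a.2.
Proof. move=> h; apply: (cvg_comp _ _ h); exact: (@cvg_snd _ _ (nbhs a.1) (nbhs a.2) _). Qed.

Lemma sub_fst (A B : normedModType R) (T : Type) (FF : set_system T) {FFF : Filter FF}
  (f g : T -> A * B) : (fun k => f k - g k) @ FF --> (0 : A * B) ->
  (fun k => (f k).1 - (g k).1) @ FF --> 0.
Proof. move=> h; have := cvg_fst1 h; simpl; exact. Qed.

Lemma sub_snd (A B : normedModType R) (T : Type) (FF : set_system T) {FFF : Filter FF}
  (f g : T -> A * B) : (fun k => f k - g k) @ FF --> (0 : A * B) ->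
  (fun k => (f k).2 - (g k).2) @ FF --> 0.
Proof. move=> h; have := cvg_snd1 h; simpl; exact. Qed.

Lemma cvg_pair' (A B : normedModType R) (T : Type) (FF : set_system T) {FFF : Filter FF}
  (f : T -> A) (g : T -> B) (a : A) (b : B) :
  f @ FF --> a -> g @ FF --> b -> (f x, g x) @[x --> FF] --> (a, b).
Proof. by move=> ha hb; apply: (@cvg_pair _ _ _ _ (nbhs a) (nbhs b)). Qed.

Lemma cvg_shift (W : normedModType R) (a b : nat -> W) (L : W) :
  a @ \oo --> L -> (fun k => b k - a k) @ \oo --> (0 : W) -> b @ \oo --> L.
Proof.
move=> ha hd.
have -> : b = (fun k => a k + (b k - a k)) by apply: funext => k; rewrite addrC subrK.
rewrite -[L]addr0; exact: cvgD.
Qed.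

Lemma cvg_shift_oo (a b : nat -> R) :
  a @ \oo --> +oo -> (fun k => b k - a k) @ \oo --> (0 : R) -> b @ \oo --> +oo.
Proof.
move=> /cvgryPge ha hd; apply/cvgryPge => A.
have h1 := ha (A + 1).
have h2 : \forall k \near \oo, `|b k - a k - 0| < 1 by exact: (cvg_near_lt hd ltr01).
near=> k.
have k1 : A + 1 <= a k by near: k.
have k2 : `|b k - a k - 0| < 1 by near: k; apply: h2.
move: k2; rewrite subr0 ltr_norml => /andP[k2 _].
move: k1 k2; move: (a k) (b k) => x y; lra.
Unshelve. all: by end_near.
Qed.


Lemma lnormal_closure n m (Q : set ('rV[R]_n * 'rV[R]_m)) z eta :
  lnormal Q z eta ->
  closure [set v : ('rV[R]_n * 'rV[R]_m) * ('rV[R]_n * 'rV[R]_m) | rnormal Q v.1 v.2] (z, eta).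
Proof.
move=> [zk [etak [hr hz he]]] B hB.
have hp : (zk j, etak j) @[j --> \oo] --> (z, eta).
  by apply: (@cvg_pair _ _ _ _ (nbhs z) (nbhs eta)).
have : \forall j \near \oo, B (zk j, etak j) := hp B hB.
case/filter_ex => j Bj.
by exists (zk j, etak j); split => //; exact: hr.
Qed.

Lemma rnormal_lnormal n m (Q : set ('rV[R]_n * 'rV[R]_m)) z eta :
  rnormal Q z eta -> lnormal Q z eta.
Proof. by move=> h; exists (fun=> z), (fun=> eta); split => //; exact: cvg_cst. Qed.

End Helpers.

Section Main.
Variables (R : realType) (n m : nat) (Phi : 'rV[R]_n -> set 'rV[R]_m)
  (xb : 'rV[R]_n) (yb : 'rV[R]_m).
Notation V := (('rV[R]_n * 'rV[R]_m) * ('rV[R]_n * 'rV[R]_m))%type.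

Lemma r_sub_l x y l : rcoder Phi x y l `<=` lcoder Phi x y l.
Proof. by move=> xs h; exact: rnormal_lnormal. Qed.

Lemma a_easy : asym_reg (lcoder Phi) Phi xb yb -> asym_reg (rcoder Phi) Phi xb yb.
Proof.
move=> H xk yk xsk lamk xs hg hx hy hxs hD.
by apply: (H xk yk xsk lamk) => // k; apply: r_sub_l.
Qed.

Lemma dir_easy u T : dir_asym_prop (lcoder Phi) Phi xb yb u T ->
  dir_asym_prop (rcoder Phi) Phi xb yb u T.
Proof.
move=> H xk yk xsk lamk xs ys hg hn hne hD.
by apply: (H xk yk xsk lamk xs ys) => // k; apply: r_sub_l.
Qed.

Definition Qr : set V := [set v | rnormal (gph Phi) v.1 v.2].

Lemma closure_p (xk : nat -> 'rV[R]_n) (yk : nat -> 'rV[R]_m) xsk lamk :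
  (forall k, lcoder Phi (xk k) (yk k) (lamk k) (xsk k)) ->
  forall k, closure Qr ((xk k, yk k), (xsk k, - lamk k)).
Proof. by move=> hD k; exact: lnormal_closure (hD k). Qed.

Lemma Qr_gph (v : V) : Qr v -> gph Phi (v.1.1, v.1.2).
Proof. by case: v => [[a b] [c d]] [h _]. Qed.

Lemma Qr_rcoder (v : V) : Qr v -> rcoder Phi v.1.1 v.1.2 (- v.2.2) v.2.1.
Proof. by case: v => [[a b] [c d]] h; rewrite /rcoder /= opprK. Qed.

Lemma shift_comp (A : normedModType R) (a b : nat -> A) (L : A) :
  a @ \oo --> L -> (fun k => b k - a k) @ \oo --> (0 : A) -> b @ \oo --> L.
Proof. exact: cvg_shift. Qed.

Lemma a_hard : asym_reg (rcoder Phi) Phi xb yb -> asym_reg (lcoder Phi) Phi xb yb.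
Proof.
move=> H xk yk xsk lamk xs hg hx hy hxs hD.
pose p k : V := ((xk k, yk k), (xsk k, - lamk k)).
have [q [Qq _ qp _]] := @diag R V V Qr p (fun _ : V => (0 : V)) (fun _ => setT)
   (closure_p hD) (fun k => @filterT _ (nbhs (p k)) _).
have q1 := sub_fst (sub_fst qp).
have q2 := sub_snd (sub_fst qp).
have q3 := sub_fst (sub_snd qp).
apply: (H (fun k => (q k).1.1) (fun k => (q k).1.2) (fun k => (q k).2.1)
            (fun k => - (q k).2.2)).
- by move=> k; exact: Qr_gph.
- apply: (cvg_shift hx); exact: q1.
- apply: (cvg_shift hy); exact: q2.
- apply: (cvg_shift hxs); exact: q3.
- by move=> k; exact: Qr_rcoder.
Qed.


Definition W := ('rV[R]_n * 'rV[R]_m * 'rV[R]_m * R^o * 'rV[R]_m)%type.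

Definition Fd (v : V) : W :=
  ((enorm (v.1.1 - xb))^-1 *: (v.1.1 - xb),
   (enorm (v.1.1 - xb))^-1 *: (v.1.2 - yb),
   (enorm (v.1.2 - yb) / enorm (v.1.1 - xb)) *: (- v.2.2),
   (enorm (- v.2.2) : R^o),
   (enorm (v.1.2 - yb))^-1 *: (v.1.2 - yb) - (enorm (- v.2.2))^-1 *: (- v.2.2)).

Lemma Fd_cont (p : V) : enorm (p.1.1 - xb) != 0 -> enorm (p.1.2 - yb) != 0 ->
  enorm (- p.2.2) != 0 -> Fd v @[v --> p] --> Fd p.
Proof.
move=> nx ny nl.
have Fp : Filter (nbhs p) by exact: nbhs_filter.
have h0 : (fun v : V => v) @ p --> p := @cvg_id _ (nbhs p).
have h1 : (fun v : V => v.1) @ p --> p.1 by exact: (cvg_fst1 h0).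
have h2 : (fun v : V => v.2) @ p --> p.2 by exact: (cvg_snd1 h0).
have h11 : (fun v : V => v.1.1) @ p --> p.1.1 by exact: (cvg_fst1 h1).
have h12 : (fun v : V => v.1.2) @ p --> p.1.2 by exact: (cvg_snd1 h1).
have h22 : (fun v : V => v.2.2) @ p --> p.2.2 by exact: (cvg_snd1 h2).
have hx : (fun v : V => v.1.1 - xb) @ p --> p.1.1 - xb by exact: (cvgB h11 (cvg_cst _)).
have hy : (fun v : V => v.1.2 - yb) @ p --> p.1.2 - yb by exact: (cvgB h12 (cvg_cst _)).
have hl : (fun v : V => - v.2.2) @ p --> - p.2.2 by exact: (cvgN h22).
have ex := cvg_enorm (FFF:=Fp) hx.
have ey := cvg_enorm (FFF:=Fp) hy.
have el := cvg_enorm (FFF:=Fp) hl.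
have ix : (fun v : V => (enorm (v.1.1 - xb))^-1) @ p --> (enorm (p.1.1 - xb))^-1.
  exact: (cvgV nx ex).
have iy : (fun v : V => (enorm (v.1.2 - yb))^-1) @ p --> (enorm (p.1.2 - yb))^-1.
  exact: (cvgV ny ey).
have il : (fun v : V => (enorm (- v.2.2))^-1) @ p --> (enorm (- p.2.2))^-1.
  exact: (cvgV nl el).
have c1 : (fun v : V => (enorm (v.1.1 - xb))^-1 *: (v.1.1 - xb)) @ p -->
   (enorm (p.1.1 - xb))^-1 *: (p.1.1 - xb) by exact: cvgZ ix hx.
have c2 : (fun v : V => (enorm (v.1.1 - xb))^-1 *: (v.1.2 - yb)) @ p -->
   (enorm (p.1.1 - xb))^-1 *: (p.1.2 - yb) by exact: cvgZ ix hy.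
have c3 : (fun v : V => (enorm (v.1.2 - yb) / enorm (v.1.1 - xb)) *: (- v.2.2)) @ p -->
   (enorm (p.1.2 - yb) / enorm (p.1.1 - xb)) *: (- p.2.2).
  by apply: cvgZ => //; exact: cvgM ey ix.
have c5 : (fun v : V => (enorm (v.1.2 - yb))^-1 *: (v.1.2 - yb) - (enorm (- v.2.2))^-1 *: (- v.2.2)) @ p -->
   (enorm (p.1.2 - yb))^-1 *: (p.1.2 - yb) - (enorm (- p.2.2))^-1 *: (- p.2.2).
  by apply: cvgB; apply: cvgZ.
rewrite /Fd.
apply: cvg_pair'; last exact: c5.
apply: cvg_pair'; last exact: el.
apply: cvg_pair'; last exact: c3.
apply: cvg_pair'; last exact: c2.
exact: c1.
Qed.


Lemma dir_hard u T : closed (gph Phi) -> gph Phi (xb, yb) ->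
  dir_asym_prop (rcoder Phi) Phi xb yb u T -> dir_asym_prop (lcoder Phi) Phi xb yb u T.
Proof.
move=> cl gb H xk yk xsk lamk xs ys hg hn hne hD hx hy hxs hu hy0 hys hlam hdir.
pose p k : V := ((xk k, yk k), (xsk k, - lamk k)).
pose G := fun _ : nat => [set v : V | ~ Phi v.1.1 yb /\ ~ (enorm (v.1.2 - yb) = 0)].
have o1 : open [set v : V | ~ Phi v.1.1 yb].
  have c : closed [set v : V | Phi v.1.1 yb].
    have -> : [set v : V | Phi v.1.1 yb] = (fun v : V => (v.1.1, yb)) @^-1` gph Phi by [].
    apply: (continuous_closedP _).1 cl => v.
    apply: cvg_pair'; last exact: cvg_cst.
    by apply: cvg_fst1; apply: cvg_fst1; exact: cvg_id.
  have -> : [set v : V | ~ Phi v.1.1 yb] = ~` [set v : V | Phi v.1.1 yb] by [].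
  by rewrite openC.
have o2 : open [set v : V | ~ (enorm (v.1.2 - yb) = 0)].
  have c : closed [set v : V | enorm (v.1.2 - yb) = 0].
    have -> : [set v : V | enorm (v.1.2 - yb) = 0] =
      (fun v : V => enorm (v.1.2 - yb)) @^-1` [set y : R | y = 0] by [].
    have := (@continuous_closedP V R (fun v : V => enorm (v.1.2 - yb))).1. move=> hh. apply: hh; last exact: closed_eq. move=> v.
    apply: cvg_enorm; apply: cvgB; last exact: cvg_cst.
    by apply: cvg_snd1; apply: cvg_fst1; exact: cvg_id.
  have -> : [set v : V | ~ (enorm (v.1.2 - yb) = 0)] = ~` [set v : V | enorm (v.1.2 - yb) = 0] by [].
  by rewrite openC.
have ny : forall k, ~ (enorm (yk k - yb) = 0).
  move=> k /enorm_eq0 /eqP; rewrite subr_eq0 => /eqP e.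
  by move: (hne k); rewrite e eqxx.
have hG : forall k, nbhs (p k) (G k).
  move=> k; apply: filterI.
  - apply: open_nbhs_nbhs; split => //; exact: hn.
  - apply: open_nbhs_nbhs; split => //=; exact: ny.
have cF : \forall k \near \oo, Fd v @[v --> p k] --> Fd (p k).
  have h1 := (cvgryPge _).1 hlam 1.
  near=> k; apply: Fd_cont.
  - apply/eqP => /enorm_eq0 /eqP; rewrite subr_eq0 => /eqP e.
    by apply: (hn k); rewrite /= in e; rewrite e; exact: gb.
  - by apply/eqP; exact: ny.
  - have h : 1 <= enorm (lamk k) by near: k; apply: h1.
    by rewrite /= opprK gt_eqF // (lt_le_trans ltr01 h).
have [q [Qq Gq qp Fq]] := @diag R V W Qr p Fd G (closure_p hD) hG.
have Fq' := Fq cF.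
have d5 := sub_snd Fq'.
have d4 := sub_snd (sub_fst Fq').
have d3 := sub_snd (sub_fst (sub_fst Fq')).
have d2 := sub_snd (sub_fst (sub_fst (sub_fst Fq'))).
have d1 := sub_fst (sub_fst (sub_fst (sub_fst Fq'))).
have q1 := sub_fst (sub_fst qp).
have q2 := sub_snd (sub_fst qp).
have q3 := sub_fst (sub_snd qp).
have hys' : (fun k => (Fd (p k)).1.1.2) @ \oo --> ys.
  have -> : (fun k => (Fd (p k)).1.1.2) =
    (fun k => (enorm (yk k - yb) / enorm (xk k - xb)) *: lamk k).
    by apply: funext => k; rewrite /Fd /= opprK.
  exact: hys.
have hdir' : (fun k => (Fd (p k)).2) @ \oo --> (0 : 'rV[R]_m).
  have -> : (fun k => (Fd (p k)).2) =
    (fun k => (enorm (yk k - yb))^-1 *: (yk k - yb) - (enorm (lamk k))^-1 *: lamk k).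
    by apply: funext => k; rewrite /Fd /= opprK.
  exact: hdir.
have d4' : (fun k => enorm (- (q k).2.2) - enorm (lamk k)) @ \oo --> (0 : R).
  have -> : (fun k => enorm (- (q k).2.2) - enorm (lamk k)) =
    (fun k => (Fd (q k)).1.2 - (Fd (p k)).1.2).
    by apply: funext => k; rewrite /Fd /= opprK.
  exact: d4.
apply: (H (fun k => (q k).1.1) (fun k => (q k).1.2) (fun k => (q k).2.1)
            (fun k => - (q k).2.2) xs ys).
- by move=> k; exact: Qr_gph.
- by move=> k; case: (Gq k).
- move=> k; case: (Gq k) => _ h; apply/eqP => e; apply: h.
  by rewrite e subrr enorm0.
- by move=> k; exact: Qr_rcoder.
- apply: (cvg_shift hx); exact: q1.
- apply: (cvg_shift hy); exact: q2.
- apply: (cvg_shift hxs); exact: q3.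
- apply: (cvg_shift hu); exact: d1.
- apply: (cvg_shift hy0); exact: d2.
- apply: (cvg_shift hys'); exact: d3.
- exact: (cvg_shift_oo hlam d4').
- apply: (cvg_shift hdir'); exact: d5.
Unshelve. all: by end_near.
Qed.

End Main.

Unset Implicit Arguments. Set Strict Implicit.

Theorem proposition5p2 (R : realType) (n m : nat)
  (Phi : 'rV[R]_n -> set 'rV[R]_m) (xb : 'rV[R]_n) (yb : 'rV[R]_m) (u : 'rV[R]_n) :
  closed (gph Phi) -> gph Phi (xb, yb) -> enorm u = 1 ->
  [/\ asym_reg (rcoder Phi) Phi xb yb <-> asym_reg (lcoder Phi) Phi xb yb,
      dir_asym_reg (rcoder Phi) Phi xb yb u <-> dir_asym_reg (lcoder Phi) Phi xb yb u &
      strong_dir_asym_reg (rcoder Phi) Phi xb yb u <->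
        strong_dir_asym_reg (lcoder Phi) Phi xb yb u].
Proof.
move=> cl gb _; split; split.
- exact: a_hard.
- exact: a_easy.
- exact: dir_hard.
- exact: dir_easy.
- exact: dir_hard.
- exact: dir_easy.
Qed.
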